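(* Under Assumptions 1, 2 and 3, let $\lambda_1>0$ be arbitrary and $\lambda_2=19\sqrt{\nu_n\rho_n n}$, and let $(\hat S,\hat L)$ and $\hat{\mathcal O}$ be as in the context. Then there is an absolute constant $c>0$ such that, with probability at least $1-c/n$, $\hat{\mathcal O}\cap\mathcal I=\emptyset$.
   Context: Let $n\ge2$ and let $[n]=\mathcal I\sqcup\mathcal O$ be a partition into inliers $\mathcal I$ and outliers $\mathcal O$, $s=|\mathcal O|$. Write $I=\mathcal I\times\mathcal I$ and $O=([n]\times[n])\setminus I$. For $M\in\mathbb R^{n\times n}$ and $\mathcal S\subset[n]\times[n]$, $M_{|\mathcal S}=\mathbb 1_{\mathcal S}\odot M$ ($\odot$ entrywise product, $\mathbb 1_{\mathcal S}$ indicator matrix); $(\cdot)_+$ is the entrywise positive part; $M_{\cdot,j}$, $M_{j,\cdot}$ denote the $j$-th column and row. Let $\rho_n\in(0,1/2]$, $\gamma_n\in(0,1]$, $k\ge1$. $L^*$ is a symmetric $n\times n$ matrix of rank $k$ with entries in $[0,\rho_n]$ and $L^*_{ij}=0$ whenever $i\in\mathcal O$ or $j\in\mathcal O$. $S^*$ is an $n\times n$ matrix with entries in $[0,\gamma_n]$, zero diagonal, $S^*_{\cdot,j}=0$ for all $j\in\mathcal I$, and $L^*+S^*+(S^* )^\top$ has entries in $[0,1]$. The adjacency matrix $A$ is symmetric with zero diagonal and $(A_{ij})_{i<j}$ are independent, $A_{ij}\sim\mathrm{Bernoulli}((L^*+S^*+(S^* )^\top)_{ij})$. The sampling matrix $\Omega$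 is symmetric with zero diagonal, $(\Omega_{ij})_{i<j}$ are independent $\mathrm{Bernoulli}(\Pi_{ij})$, $\Omega$ independent of $A$, $\Pi=\mathbb E[\Omega]$. $\Sigma=A-\mathbb E[A]$. Norms: $\|M\|_{L_2(\Pi)}^2=\sum_{i,j}\Pi_{ij}M_{ij}^2$, $\|M\|_{2,1}=\sum_j(\sum_iM_{ij}^2)^{1/2}$, $\|M\|_{2,\infty}=\max_j(\sum_iM_{ij}^2)^{1/2}$, $\|\cdot\|_F$ Frobenius, $\|\cdot\|_*$ nuclear, $\|\cdot\|_{op}$ operator norm, $\|M\|_\infty=\max_{ij}|M_{ij}|$. Assumption 1: there is $\mu_n>0$ with $\Pi_{ij}\ge\mu_n$ for all $(i,j)\in I$, $i\neq j$; and $\nu_n,\tilde\nu_n\in(0,1]$ satisfy $\sum_{j\in\mathcal I}\Pi_{ij}\le\nu_n n$ for all $i\in\mathcal I$ and $\sum_{j\in\mathcal O}\Pi_{ij}\le\tilde\nu_n s$ for all $i\in[n]$. Assumption 2: $\nu_n\rho_n\ge\log(n)/n$ and $\tilde\nu_n\gamma_n\ge\log(n)/n$. Assumption 3: $\nu_n\rho_n n\ge\tilde\nu_n\gamma_n s$. Estimator: for $\lambda_1,\lambda_2>0$, $\mathcal F(S,L)=\frac12\|\Omega\odot(A-L-S-S^\top)\|_F^2+\lambda_1\|L\|_*+\lambda_2\|S\|_{2,1}$; $(\hat S,\hat L)$ is any minimizer of $\mathcal F$ over $S\in[0,1]^{n\times n}$ and symmetric $L\in[0,\rho_n]^{n\times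 n}$, and (standing assumption that the upper box constraint on $S$ is inactive) $\hat S$ also minimizes $S\mapsto\mathcal F(S,\hat L)$ over nonnegative $S\in\mathbb R_+^{n\times n}$. The detected outliers are $\hat{\mathcal O}=\{j\in[n]:\hat S_{\cdot,j}\ne0\}$. *)

(* Defs.v *)
(* classical reals. Matrices are functions nat -> nat -> R,
   only entries with indices < n are meaningful. *)
From Stdlib Require Import Reals Lra List Arith.
From Stdlib Require Import ClassicalEpsilon.
Import ListNotations.
Open Scope R_scope.

Definition Mat := nat -> nat -> R.

Definition sumR (n : nat) (f : nat -> R) : R :=
  fold_right Rplus 0 (map f (seq 0 n)).

Definition card_out (n : nat) (isO : nat -> bool) : nat :=
  length (filter isO (seq 0 n)).

Definition frob2 (n : nat) (M : Mat) : R :=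
  sumR n (fun i => sumR n (fun j => (M i j) ^ 2)).

Definition norm21 (n : nat) (M : Mat) : R :=
  sumR n (fun j => sqrt (sumR n (fun i => (M i j) ^ 2))).

Definition vnorm (n : nat) (x : nat -> R) : R := sqrt (sumR n (fun i => (x i) ^ 2)).

Definition matvec (n : nat) (M : Mat) (x : nat -> R) : nat -> R :=
  fun i => sumR n (fun j => M i j * x j).

Definition opnorm_le (n : nat) (M : Mat) (t : R) : Prop :=
  forall x : nat -> R, vnorm n (matvec n M x) <= t * vnorm n x.

(* nuclear norm, as the dual norm of the operator norm:
   ||L||_* = sup { <L, M> : ||M||_op <= 1 } *)
Definition nuc_set (n : nat) (L : Mat) : R -> Prop :=
  fun v => exists M : Mat, opnorm_le n M 1 /\
             v = sumR n (fun i => sumR n (fun j => L i j * M i j)).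

Definition nuc (n : nat) (L : Mat) : R :=
  epsilon (inhabits 0) (fun t => is_lub (nuc_set n L) t).

Definition rank_le (n : nat) (M : Mat) (k : nat) : Prop :=
  exists u v : nat -> nat -> R, forall i j, (i < n)%nat -> (j < n)%nat ->
    M i j = sumR k (fun l => u l i * v l j).

Definition rank_eq (n : nat) (M : Mat) (k : nat) : Prop :=
  rank_le n M k /\ forall k', (k' < k)%nat -> ~ rank_le n M k'.

Definition Fobj (n : nat) (Om A : Mat) (lam1 lam2 : R) (S L : Mat) : R :=
  / 2 * frob2 n (fun i j => Om i j * (A i j - L i j - S i j - S j i))
  + lam1 * nuc n L + lam2 * norm21 n S.

Definition feasS (n : nat) (S : Mat) : Prop :=
  forall i j, (i < n)%nat -> (j < n)%nat -> 0 <= S i j <= 1.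
Definition feasL (n : nat) (rho : R) (L : Mat) : Prop :=
  forall i j, (i < n)%nat -> (j < n)%nat -> 0 <= L i j <= rho /\ L i j = L j i.
Definition nonnegS (n : nat) (S : Mat) : Prop :=
  forall i j, (i < n)%nat -> (j < n)%nat -> 0 <= S i j.

(* The event: every minimizer (Shat, Lhat) of F over the feasible set, such that
   Shat also minimizes S |-> F(S, Lhat) over nonnegative S, detects no inlier:
   Ohat ∩ I = ∅, i.e. Shat_{.,j} = 0 for every inlier j. *)
Definition no_inlier_detected (n : nat) (isO : nat -> bool) (rho lam1 lam2 : R)
    (A Om : Mat) : Prop :=
  forall Sh Lh : Mat,
    feasS n Sh -> feasL n rho Lh ->
    (forall S L, feasS n S -> feasL n rho L ->
       Fobj n Om A lam1 lam2 Sh Lh <= Fobj n Om A lam1 lam2 S L) ->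
    (forall S, nonnegS n S ->
       Fobj n Om A lam1 lam2 Sh Lh <= Fobj n Om A lam1 lam2 S Lh) ->
    forall j, (j < n)%nat -> isO j = false ->
      forall i, (i < n)%nat -> Sh i j = 0.

Definition pairs (n : nat) : list (nat * nat) :=
  flat_map (fun i => map (fun j => (i, j)) (seq (S i) (n - S i))) (seq 0 n).

(* symmetric zero-diagonal 0/1 matrix built from one bit per pair i<j *)
Fixpoint lookup (l : list ((nat * nat) * bool)) (i j : nat) : R :=
  match l with
  | [] => 0
  | ((a, b), x) :: t =>
      if ((Nat.eqb a i && Nat.eqb b j) || (Nat.eqb a j && Nat.eqb b i))%bool
      then (if x then 1 else 0) else lookup t i j
  end.

Definition mat_of_bits (n : nat) (bs : list bool) : Mat :=
  lookup (combine (pairs n) bs).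

(* expectation of f over independent Bernoulli(p_k) bits *)
Fixpoint expect (ps : list R) (f : list bool -> R) : R :=
  match ps with
  | [] => f []
  | p :: ps' => p * expect ps' (fun l => f (true :: l))
                + (1 - p) * expect ps' (fun l => f (false :: l))
  end.

Definition indic (P : Prop) : R :=
  if excluded_middle_informative P then 1 else 0.

(* Probability of an event E(A, Omega) where (A_ij)_{i<j} ~ Bern(P_ij) and
   (Omega_ij)_{i<j} ~ Bern(Pi_ij) all independent. *)
Definition prob_AO (n : nat) (P Pi : Mat) (E : Mat -> Mat -> Prop) : R :=
  expect (map (fun ij => P (fst ij) (snd ij)) (pairs n)) (fun ba =>
  expect (map (fun ij => Pi (fst ij) (snd ij)) (pairs n)) (fun bo =>
    indic (E (mat_of_bits n ba) (mat_of_bits n bo)))).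

(* Main.v *)
Require Import Defs.
From Stdlib Require Import Reals List Arith Lra Lia Psatz Classical Bool ClassicalEpsilon.
Import ListNotations.
Open Scope R_scope.

Definition sumL {A} (l : list A) (f : A -> R) : R := fold_right Rplus 0 (map f l).

Lemma sumR_sumL n f : sumR n f = sumL (seq 0 n) f.
Proof. reflexivity. Qed.

Lemma sumL_cons {A} (x : A) l f : sumL (x::l) f = f x + sumL l f.
Proof. reflexivity. Qed.

Lemma sumL_app {A} (l1 l2 : list A) f : sumL (l1++l2) f = sumL l1 f + sumL l2 f.
Proof. induction l1 as [|x l IH]; simpl. unfold sumL; simpl; ring.
rewrite !sumL_cons, IH; ring. Qed.

Lemma sumL_ext {A} (l : list A) f g : (forall x, In x l -> f x = g x) -> sumL l f = sumL l g.
Proof. induction l as [|x l IH]; intros H; [reflexivity|]. rewrite !sumL_cons.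
rewrite H by (left; reflexivity). rewrite IH by (intros; apply H; right; assumption). reflexivity. Qed.

Lemma sumL_le {A} (l : list A) f g : (forall x, In x l -> f x <= g x) -> sumL l f <= sumL l g.
Proof. induction l as [|x l IH]; intros H; [unfold sumL; simpl; lra|]. rewrite !sumL_cons.
assert (f x <= g x) by (apply H; left; reflexivity).
assert (sumL l f <= sumL l g) by (apply IH; intros; apply H; right; assumption). lra. Qed.

Lemma sumL_plus {A} (l : list A) f g : sumL l (fun x => f x + g x) = sumL l f + sumL l g.
Proof. induction l as [|x l IH]; [unfold sumL; simpl; ring|]. rewrite !sumL_cons, IH; ring. Qed.

Lemma sumL_minus {A} (l : list A) f g : sumL l (fun x => f x - g x) = sumL l f - sumL l g.
Proof. induction l as [|x l IH]; [unfold sumL; simpl; ring|]. rewrite !sumL_cons, IH; ring. Qed.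

Lemma sumL_scal {A} (l : list A) c f : sumL l (fun x => c * f x) = c * sumL l f.
Proof. induction l as [|x l IH]; [unfold sumL; simpl; ring|]. rewrite !sumL_cons, IH; ring. Qed.

Lemma sumL_zero {A} (l : list A) : sumL l (fun _ => 0) = 0.
Proof. induction l as [|x l IH]; [reflexivity|]. rewrite sumL_cons, IH; ring. Qed.

Lemma sumL_nonneg {A} (l : list A) f : (forall x, In x l -> 0 <= f x) -> 0 <= sumL l f.
Proof. intros H. rewrite <- (sumL_zero l). apply sumL_le. assumption. Qed.

Lemma sumL_term {A} (l : list A) f x : (forall y, In y l -> 0 <= f y) -> In x l -> f x <= sumL l f.
Proof. induction l as [|y l IH]; intros H Hx; [destruct Hx|]. rewrite sumL_cons.
destruct Hx as [<-|Hx].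
- assert (0 <= sumL l f) by (apply sumL_nonneg; intros; apply H; right; assumption). lra.
- assert (f x <= sumL l f) by (apply IH; [intros; apply H; right|]; assumption).
  assert (0 <= f y) by (apply H; left; reflexivity). lra. Qed.

Lemma sumL_map {A B} (h : A -> B) l f : sumL (map h l) f = sumL l (fun x => f (h x)).
Proof. induction l as [|x l IH]; [reflexivity|]. simpl map. rewrite !sumL_cons, IH; reflexivity. Qed.

Lemma sumL_flat_map {A B} (F : A -> list B) l f : sumL (flat_map F l) f = sumL l (fun x => sumL (F x) f).
Proof. induction l as [|x l IH]; [reflexivity|]. simpl flat_map. rewrite sumL_app, sumL_cons, IH; reflexivity. Qed.

Lemma sumL_const_seq s m c : sumL (seq s m) (fun _ => c) = INR m * c.
Proof. revert s; induction m as [|m IH]; intros s. unfold sumL; simpl; ring.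
simpl seq. rewrite sumL_cons, IH, S_INR; ring. Qed.

Lemma sumL_sel s m j X : sumL (seq s m) (fun a => if a =? j then X a else 0)
  = if ((s <=? j) && (j <? s + m))%bool then X j else 0.
Proof. revert s; induction m as [|m IH]; intros s.
- unfold sumL; simpl. destruct (s <=? j) eqn:E1, (j <? s + 0) eqn:E2; simpl; try reflexivity.
  apply Nat.leb_le in E1; apply Nat.ltb_lt in E2; lia.
- simpl seq. rewrite sumL_cons, IH. destruct (s =? j) eqn:E.
  + apply Nat.eqb_eq in E; subst.
    destruct (S j <=? j) eqn:E1. apply Nat.leb_le in E1; lia.
    rewrite Nat.leb_refl. destruct (j <? j + S m) eqn:E2. simpl; ring.
    apply Nat.ltb_ge in E2; lia.
  + apply Nat.eqb_neq in E.
    destruct (S s <=? j) eqn:E1, (s <=? j) eqn:E3, (j <? S s + m) eqn:E2, (j <? s + S m) eqn:E4; simpl;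
    try ring;
    repeat match goal with H : (_ <=? _) = true |- _ => apply Nat.leb_le in H
    | H : (_ <=? _) = false |- _ => apply Nat.leb_gt in H
    | H : (_ <? _) = true |- _ => apply Nat.ltb_lt in H
    | H : (_ <? _) = false |- _ => apply Nat.ltb_ge in H end; lia.
Qed.

Lemma sumL_sel_le s m j X : 0 <= X j -> sumL (seq s m) (fun a => if a =? j then X a else 0) <= X j.
Proof. intros H. rewrite sumL_sel. destruct (_ && _)%bool; lra. Qed.

Lemma sumR_sel n j X : (j < n)%nat -> sumR n (fun a => if a =? j then X a else 0) = X j.
Proof. intros H. rewrite sumR_sumL, sumL_sel. replace ((0 <=? j) && (j <? 0 + n))%bool with true. reflexivity.
symmetry. apply andb_true_intro; split; [apply Nat.leb_le|apply Nat.ltb_lt]; lia. Qed.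

Lemma exp_mono x y : x <= y -> exp x <= exp y.
Proof. intros [H|H]. left; apply exp_increasing; assumption. subst; lra. Qed.

Lemma expect_cons p ps f : expect (p::ps) f = p * expect ps (fun l => f (true::l)) + (1-p) * expect ps (fun l => f (false::l)).
Proof. reflexivity. Qed.

Lemma expect_ext ps f g : (forall l, f l = g l) -> expect ps f = expect ps g.
Proof. revert f g; induction ps as [|p ps IH]; intros f g H; simpl. apply H.
rewrite (IH (fun l => f (true::l)) (fun l => g (true::l))) by (intros; apply H).
rewrite (IH (fun l => f (false::l)) (fun l => g (false::l))) by (intros; apply H). reflexivity. Qed.

Lemma expect_plus ps f g : expect ps (fun l => f l + g l) = expect ps f + expect ps g.
Proof. revert f g; induction ps as [|p ps IH]; intros f g; simpl. reflexivity.
pose proof (IH (fun l => f (true::l)) (fun l => g (true::l))) as H1. cbv beta in H1.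
pose proof (IH (fun l => f (false::l)) (fun l => g (false::l))) as H2. cbv beta in H2.
rewrite H1, H2. ring. Qed.

Lemma expect_scal ps c f : expect ps (fun l => c * f l) = c * expect ps f.
Proof. revert f; induction ps as [|p ps IH]; intros f; simpl. reflexivity.
pose proof (IH (fun l => f (true::l))) as H1. cbv beta in H1.
pose proof (IH (fun l => f (false::l))) as H2. cbv beta in H2.
rewrite H1, H2. ring. Qed.

Lemma expect_const ps c : expect ps (fun _ => c) = c.
Proof. induction ps as [|p ps IH]; simpl. reflexivity. rewrite IH. ring. Qed.

Lemma expect_minus ps c f : expect ps (fun l => c - f l) = c - expect ps f.
Proof. rewrite (expect_ext ps _ (fun l => c + (-1) * f l)) by (intros; ring).
rewrite expect_plus, expect_scal, expect_const. ring. Qed.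

Lemma expect_mono ps f g : (forall p, In p ps -> 0 <= p <= 1) -> (forall l, f l <= g l) -> expect ps f <= expect ps g.
Proof. revert f g; induction ps as [|p ps IH]; intros f g Hp H; simpl. apply H.
assert (0 <= p <= 1) by (apply Hp; left; reflexivity).
assert (expect ps (fun l => f (true::l)) <= expect ps (fun l => g (true::l))) by (apply IH; [intros; apply Hp; right; assumption| intros; apply H]).
assert (expect ps (fun l => f (false::l)) <= expect ps (fun l => g (false::l))) by (apply IH; [intros; apply Hp; right; assumption| intros; apply H]).
nra. Qed.

Lemma sumR_S n f : sumR (S n) f = sumR n f + f n.
Proof. rewrite !sumR_sumL, seq_S, sumL_app. unfold sumL at 2; simpl. ring. Qed.

Lemma sumR_const n c : sumR n (fun _ => c) = INR n * c.
Proof. rewrite sumR_sumL. apply sumL_const_seq. Qed.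

Lemma expect_sumR ps n f : expect ps (fun l => sumR n (fun j => f j l)) = sumR n (fun j => expect ps (f j)).
Proof. induction n as [|n IH].
- unfold sumR; simpl. apply expect_const.
- rewrite (expect_ext ps _ (fun l => sumR n (fun j => f j l) + f n l)).
  rewrite expect_plus, IH, sumR_S. reflexivity.
  intros l. rewrite sumR_S. reflexivity.
Qed.

Lemma lookup_01 l i j : 0 <= lookup l i j <= 1.
Proof. induction l as [|[[a b] x] t IH]; simpl; [lra|]. destruct (_ || _)%bool; [destruct x; lra| apply IH]. Qed.

Lemma lookup_sym l i j : lookup l i j = lookup l j i.
Proof. induction l as [|[[a b] x] t IH]; simpl; [reflexivity|]. rewrite orb_comm, IH. reflexivity. Qed.

Definition inpair (j : nat) (q : nat*nat) : bool := ((fst q =? j) || (snd q =? j))%bool.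

Fixpoint bnd (j : nat) (qs : list (nat*nat)) (ba bo : list bool) : R :=
  match qs, ba, bo with
  | q::qs', x::ba', y::bo' => (if (inpair j q && x && y)%bool then 1 else 0) + bnd j qs' ba' bo'
  | _, _, _ => 0
  end.

Lemma match_sum n a b j :
  sumR n (fun i => if ((a =? i) && (b =? j) || (a =? j) && (b =? i))%bool then 1 else 0)
  <= if ((a =? j) || (b =? j))%bool then 1 else 0.
Proof. destruct ((a=?j)||(b=?j))%bool eqn:E.
- set (o := if a =? j then b else a).
  eapply Rle_trans; [| apply (sumL_sel_le 0 n o (fun _ => 1)); lra]. rewrite sumR_sumL. apply sumL_le. intros i _.
  unfold o. clear E.
  repeat match goal with |- context [?x =? ?y] => destruct (Nat.eqb_spec x y) end; simpl; try lra; lia.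
- apply orb_false_iff in E as [E1 E2]. apply Nat.eqb_neq in E1, E2.
  rewrite sumR_sumL, (sumL_ext _ _ (fun _ => 0)), sumL_zero. lra.
  intros i _. repeat match goal with |- context [?x =? ?y] => destruct (Nat.eqb_spec x y) end; simpl; try lra; lia.
Qed.

Lemma zero_sum n j : sumR n (fun i => (lookup [] i j)^2 * lookup [] i j) = 0.
Proof. rewrite sumR_sumL, (sumL_ext _ _ (fun _ => 0)), sumL_zero. reflexivity. intros; simpl; ring. Qed.

Lemma dg_le_bnd n j qs ba bo :
  sumR n (fun i => (lookup (combine qs bo) i j)^2 * lookup (combine qs ba) i j) <= bnd j qs ba bo.
Proof. revert ba bo; induction qs as [|[a b] qs IH]; intros ba bo.
- cbn [combine bnd]. rewrite zero_sum. lra.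
- destruct ba as [|x ba], bo as [|y bo]; cbn [combine bnd]; try (rewrite zero_sum; lra);
  try (rewrite sumR_sumL, (sumL_ext _ _ (fun _ => 0)), sumL_zero; [lra| intros; simpl; ring]).
  eapply Rle_trans with (sumR n (fun i => (if (x && y)%bool then 1 else 0) * (if ((a =? i) && (b =? j) || (a =? j) && (b =? i))%bool then 1 else 0)
       + (lookup (combine qs bo) i j)^2 * lookup (combine qs ba) i j)).
  + rewrite !sumR_sumL. apply sumL_le. intros i _. cbn [lookup].
    pose proof (lookup_01 (combine qs bo) i j). pose proof (lookup_01 (combine qs ba) i j).
    destruct (_ || _)%bool; [destruct x, y; simpl; nra| nra].
  + rewrite sumR_sumL, sumL_plus, sumL_scal, <- !sumR_sumL.
    pose proof (IH ba bo). pose proof (match_sum n a b j).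
    unfold inpair; simpl fst; simpl snd.
    destruct x, y; rewrite ?andb_true_r, ?andb_false_r; cbn [andb]; destruct ((a =? j) || (b =? j))%bool; lra.
Qed.

Lemma in_pairs n q : In q (pairs n) -> (fst q < snd q < n)%nat.
Proof. unfold pairs. intros H. apply in_flat_map in H as [a [Ha Hq]].
apply in_map_iff in Hq as [b [<- Hb]]. apply in_seq in Ha. apply in_seq in Hb. simpl; lia. Qed.

Lemma pairs_bound n j g : (j < n)%nat ->
  (forall a b, (a<n)%nat -> (b<n)%nat -> g a b = g b a) ->
  (forall a b, (a<n)%nat -> (b<n)%nat -> 0 <= g a b) ->
  sumL (pairs n) (fun q => if inpair j q then g (fst q) (snd q) else 0) <= sumR n (fun i => g i j).
Proof.
  intros Hj Hs Hn. unfold pairs. rewrite sumL_flat_map.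
  rewrite (sumL_ext _ _ (fun a => (if a =? j then sumL (seq (S a) (n - S a)) (fun b => g j b) else 0)
                                 + (if (S a <=? j) then g a j else 0))).
  2:{ intros a Ha. apply in_seq in Ha. rewrite sumL_map.
      rewrite (sumL_ext _ _ (fun b => (if a =? j then g j b else 0) + (if b =? j then (fun _ => g a j) b else 0))).
      2:{ intros b Hb. apply in_seq in Hb. unfold inpair; simpl.
          destruct (Nat.eqb_spec a j), (Nat.eqb_spec b j); simpl; subst; try lia; ring. }
      rewrite sumL_plus, sumL_sel. f_equal.
      - destruct (a =? j); [reflexivity| apply sumL_zero].
      - replace (S a + (n - S a))%nat with n by lia.
        destruct (S a <=? j); destruct (j <? n) eqn:E; simpl; try reflexivity. apply Nat.ltb_ge in E; lia. }
  rewrite sumL_plus, sumL_sel.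
  replace ((0 <=? j) && (j <? 0 + n))%bool with true.
  2:{ symmetry. apply andb_true_intro; split; [apply Nat.leb_le|apply Nat.ltb_lt]; lia. }
  assert (Hs2: seq 0 n = seq 0 (S j) ++ seq (S j) (n - S j)) by (rewrite <- seq_app; f_equal; lia).
  assert (HT: sumL (seq (S j) (n - S j)) (fun b => g j b) = sumL (seq 0 n) (fun b => if S j <=? b then g j b else 0)).
  { rewrite Hs2, sumL_app, (sumL_ext (seq 0 (S j)) _ (fun _ => 0)), sumL_zero, Rplus_0_l.
    - apply sumL_ext. intros b Hb. apply in_seq in Hb. destruct (Nat.leb_spec (S j) b); [reflexivity| lia].
    - intros b Hb. apply in_seq in Hb. destruct (Nat.leb_spec (S j) b); [lia| reflexivity]. }
  rewrite HT, <- sumL_plus, sumR_sumL. apply sumL_le. intros b Hb. apply in_seq in Hb.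
  destruct (Nat.leb_spec (S j) b), (Nat.leb_spec (S b) j); try lia.
  - rewrite (Hs j b) by lia. lra.
  - lra.
  - assert (b = j) by lia. subst. pose proof (Hn j j Hj Hj). lra.
Qed.

Lemma expect_nonneg ps f : (forall p, In p ps -> 0 <= p <= 1) -> (forall l, 0 <= f l) -> 0 <= expect ps f.
Proof. intros H1 H2. rewrite <- (expect_const ps 0). apply expect_mono; assumption. Qed.

Lemma bnd_expect (P Q : nat -> nat -> R) j qs :
  (forall q, In q qs -> 0 <= P (fst q) (snd q) <= 1 /\ 0 <= Q (fst q) (snd q) <= 1) ->
  expect (map (fun q => P (fst q) (snd q)) qs) (fun ba =>
    expect (map (fun q => Q (fst q) (snd q)) qs) (fun bo => exp (bnd j qs ba bo)))
  <= exp (2 * sumL qs (fun q => if inpair j q then P (fst q) (snd q) * Q (fst q) (snd q) else 0)).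
Proof. induction qs as [|q qs IH]; intros H.
- simpl. unfold sumL; simpl. rewrite Rmult_0_r. lra.
- simpl map.
  assert (Hin: forall x ba, expect (Q (fst q) (snd q) :: map (fun q => Q (fst q) (snd q)) qs)
              (fun bo => exp (bnd j (q::qs) (x::ba) bo))
       = (Q (fst q) (snd q) * exp (if (inpair j q && x)%bool then 1 else 0) + (1 - Q (fst q) (snd q)) * 1)
         * expect (map (fun q => Q (fst q) (snd q)) qs) (fun bo => exp (bnd j qs ba bo))).
  { intros x ba. rewrite expect_cons.
    rewrite (expect_ext _ (fun l => exp (bnd j (q::qs) (x::ba) (true::l)))
                          (fun l => exp (if (inpair j q && x)%bool then 1 else 0) * exp (bnd j qs ba l))).
    rewrite (expect_ext _ (fun l => exp (bnd j (q::qs) (x::ba) (false::l))) (fun l => 1 * exp (bnd j qs ba l))).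
    rewrite !expect_scal. ring.
    - intros l. cbn [bnd]. rewrite andb_false_r, Rplus_0_l; ring.
    - intros l. cbn [bnd]. rewrite andb_true_r, exp_plus. reflexivity. }
  rewrite expect_cons.
  rewrite (expect_ext _ _ _ (fun l => Hin true l)).
  rewrite (expect_ext _ _ _ (fun l => Hin false l)).
  rewrite !expect_scal.
  assert (HP: forall q', In q' qs -> 0 <= P (fst q') (snd q') <= 1 /\ 0 <= Q (fst q') (snd q') <= 1)
    by (intros; apply H; right; assumption).
  specialize (IH HP).
  set (X := expect (map (fun q0 => P (fst q0) (snd q0)) qs)
         (fun l => expect (map (fun q0 => Q (fst q0) (snd q0)) qs) (fun bo => exp (bnd j qs l bo)))) in *.
  assert (HX: 0 <= X).
  { unfold X. apply expect_nonneg.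
    - intros p Hp. apply in_map_iff in Hp as [q' [<- Hq']]. apply HP; assumption.
    - intros l. apply expect_nonneg; [| intros; left; apply exp_pos].
      intros p Hp. apply in_map_iff in Hp as [q' [<- Hq']]. apply HP; assumption. }
  destruct (H q (or_introl eq_refl)) as [Hp Hq].
  rewrite sumL_cons, Rmult_plus_distr_l, exp_plus, andb_false_r. cbv iota. rewrite exp_0.
  set (p := P (fst q) (snd q)) in *. set (r := Q (fst q) (snd q)) in *.
  assert (HK: 0 <= p * (r * exp (if (inpair j q && true)%bool then 1 else 0) + (1 - r) * 1) + (1 - p) * ((r * 1 + (1 - r) * 1))
            <= exp (2 * (if inpair j q then p * r else 0))).
  { rewrite andb_true_r. pose proof exp_le_3. pose proof (exp_pos 1).
    destruct (inpair j q); cbv iota; rewrite ?exp_0.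
    - pose proof (exp_ineq1_le (2 * (p * r))). assert (0 <= p * r) by nra. assert (p * r * (exp 1 - 1) <= p * r * 2) by (apply Rmult_le_compat_l; lra). split; nra.
    - rewrite Rmult_0_r, exp_0. split; nra. }
  replace (p * ((r * exp (if (inpair j q && true)%bool then 1 else 0) + (1 - r) * 1) * X) +
    (1 - p) * ((r * 1 + (1 - r) * 1) * X)) with
    ((p * (r * exp (if (inpair j q && true)%bool then 1 else 0) + (1 - r) * 1) + (1 - p) * ((r * 1 + (1 - r) * 1))) * X) by ring.
  apply Rmult_le_compat; try lra.
Qed.

Lemma sumR_ext n f g : (forall i, (i < n)%nat -> f i = g i) -> sumR n f = sumR n g.
Proof. intros H. rewrite !sumR_sumL. apply sumL_ext. intros x Hx. apply in_seq in Hx. apply H; lia. Qed.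
Lemma sumR_le n f g : (forall i, (i < n)%nat -> f i <= g i) -> sumR n f <= sumR n g.
Proof. intros H. rewrite !sumR_sumL. apply sumL_le. intros x Hx. apply in_seq in Hx. apply H; lia. Qed.
Lemma sumR_plus n f g : sumR n (fun x => f x + g x) = sumR n f + sumR n g.
Proof. rewrite !sumR_sumL. apply sumL_plus. Qed.
Lemma sumR_minus n f g : sumR n (fun x => f x - g x) = sumR n f - sumR n g.
Proof. rewrite !sumR_sumL. apply sumL_minus. Qed.
Lemma sumR_scal n c f : sumR n (fun x => c * f x) = c * sumR n f.
Proof. rewrite !sumR_sumL. apply sumL_scal. Qed.
Lemma sumR_zero n : sumR n (fun _ => 0) = 0.
Proof. rewrite !sumR_sumL. apply sumL_zero. Qed.
Lemma sumR_sel_c n j c : (j < n)%nat -> sumR n (fun a => if a =? j then c else 0) = c.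
Proof. intros H. apply (sumR_sel n j (fun _ => c) H). Qed.
Lemma sumR_term n f i : (forall k, (k < n)%nat -> 0 <= f k) -> (i < n)%nat -> f i <= sumR n f.
Proof. intros H Hi. rewrite sumR_sumL. apply sumL_term. intros y Hy; apply in_seq in Hy; apply H; lia.
apply in_seq; lia. Qed.
Lemma sumR_nonneg n f : (forall k, (k < n)%nat -> 0 <= f k) -> 0 <= sumR n f.
Proof. intros H. rewrite <- (sumR_zero n). apply sumR_le. assumption. Qed.

Lemma pt1 o aa l s t : 0 <= l -> 0 <= s -> 0 <= t ->
  (o * (aa - l - 0 - t))^2 - (o * (aa - l - s - t))^2 <= 2 * (o^2 * aa) * s.
Proof. intros. assert (0 <= o^2) by nra. assert (0 <= o^2 * s) by nra. nra. Qed.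
Lemma pt2 o aa l s t : 0 <= l -> 0 <= s -> 0 <= t ->
  (o * (aa - l - t - 0))^2 - (o * (aa - l - t - s))^2 <= 2 * (o^2 * aa) * s.
Proof. intros. assert (0 <= o^2) by nra. assert (0 <= o^2 * s) by nra. nra. Qed.
Lemma pt3 o aa l s : 0 <= l -> 0 <= s ->
  (o * (aa - l - 0 - 0))^2 - (o * (aa - l - s - s))^2 <= 2 * (o^2 * aa) * s + 2 * (o^2 * aa) * s.
Proof. intros. assert (0 <= o^2) by nra. assert (0 <= o^2 * s) by nra. nra. Qed.

Lemma det n (Om A Lh Sh : Mat) lam1 lam2 j :
  (j < n)%nat -> 0 < lam2 ->
  (forall a b, (a<n)%nat -> (b<n)%nat -> 0 <= Om a b <= 1 /\ 0 <= A a b <= 1 /\ Om a b = Om b a /\ A a b = A b a) ->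
  (forall a b, (a<n)%nat -> (b<n)%nat -> 0 <= Lh a b) ->
  nonnegS n Sh ->
  4 * sumR n (fun i => Om i j ^ 2 * A i j) < lam2 ^ 2 ->
  (forall S, nonnegS n S -> Fobj n Om A lam1 lam2 Sh Lh <= Fobj n Om A lam1 lam2 S Lh) ->
  forall i, (i < n)%nat -> Sh i j = 0.
Proof.
  intros Hj Hl HOA HL HS Hd Hmin i0 Hi0.
  destruct (Req_dec (Sh i0 j) 0) as [|Hne]; [assumption| exfalso].
  set (S' := fun a b => if b =? j then 0 else Sh a b).
  assert (HS': nonnegS n S') by (intros a b Ha Hb; unfold S'; destruct (b =? j); [lra| apply HS; auto]).
  specialize (Hmin S' HS').
  set (w := fun i => Om i j ^ 2 * A i j). set (v := fun i => Sh i j).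
  set (V := sqrt (sumR n (fun i => Sh i j ^ 2))).
  assert (E1: forall a, (a<n)%nat ->
    sumR n (fun b => (Om a b * (A a b - Lh a b - S' a b - S' b a))^2)
    - sumR n (fun b => (Om a b * (A a b - Lh a b - Sh a b - Sh b a))^2)
    <= 2 * w a * v a + (if a =? j then sumR n (fun b => 2 * (Om a b ^ 2 * A a b) * Sh b j) else 0)).
  { intros a Ha. rewrite <- sumR_minus.
    eapply Rle_trans.
    { apply sumR_le with (g := fun b => (if b =? j then 2 * w a * v a else 0)
            + (if a =? j then 2 * (Om a b ^ 2 * A a b) * Sh b j else 0)).
      intros b Hb. unfold S', w, v.
      pose proof (HS a b Ha Hb). pose proof (HS b a Hb Ha). pose proof (HS a j Ha Hj).
      pose proof (HS b j Hb Hj). pose proof (HL a b Ha Hb).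
      destruct (Nat.eqb_spec b j), (Nat.eqb_spec a j); subst.
      - apply pt3; assumption.
      - rewrite Rplus_0_r. apply pt1; assumption.
      - rewrite Rplus_0_l. apply pt2; assumption.
      - lra. }
    rewrite sumR_plus, sumR_sel_c by assumption.
    destruct (a =? j); cbv beta iota; [lra| rewrite sumR_zero; lra]. }
  assert (Hf: frob2 n (fun a b => Om a b * (A a b - Lh a b - S' a b - S' b a))
            - frob2 n (fun a b => Om a b * (A a b - Lh a b - Sh a b - Sh b a))
            <= 4 * sumR n (fun i => w i * v i)).
  { unfold frob2. rewrite <- sumR_minus.
    eapply Rle_trans. { apply sumR_le. exact E1. }
    rewrite sumR_plus.
    pose proof (sumR_sel n j (fun a => sumR n (fun b => 2 * (Om a b ^ 2 * A a b) * Sh b j)) Hj) as HH.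
    cbv beta in HH. rewrite HH.
    rewrite (sumR_ext n (fun b => 2 * (Om j b ^ 2 * A j b) * Sh b j) (fun b => 2 * (w b * v b))).
    2:{ intros b Hb. unfold w, v. destruct (HOA j b Hj Hb) as [_ [_ [E3 E4]]]. rewrite E3, E4. ring. }
    rewrite (sumR_ext n (fun a => 2 * w a * v a) (fun b => 2 * (w b * v b))) by (intros; ring).
    rewrite sumR_scal. lra. }
  assert (Hn: norm21 n S' = norm21 n Sh - V).
  { unfold norm21.
    rewrite (sumR_ext n (fun c => sqrt (sumR n (fun i => S' i c ^ 2)))
      (fun c => sqrt (sumR n (fun i => Sh i c ^ 2)) - (if c =? j then sqrt (sumR n (fun i => Sh i c ^ 2)) else 0))).
    - rewrite sumR_minus.
      pose proof (sumR_sel n j (fun c => sqrt (sumR n (fun i => Sh i c ^ 2))) Hj) as HH.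
      cbv beta in HH. rewrite HH. reflexivity.
    - intros c Hc. unfold S'. destruct (c =? j); cbv beta iota; [|ring].
      rewrite (sumR_ext n _ (fun _ => 0)), sumR_zero, sqrt_0. ring.
      intros; ring. }
  assert (HVp: 0 < V).
  { apply sqrt_lt_R0. eapply Rlt_le_trans; [| apply (sumR_term n (fun i => Sh i j ^ 2) i0)].
    - simpl. nra.
    - intros; simpl; nra.
    - assumption. }
  assert (HV2: V * V = sumR n (fun i => v i ^ 2)).
  { unfold V. apply sqrt_sqrt. apply sumR_nonneg. intros; simpl; nra. }
  set (d := sumR n w).
  set (t := 2 * V / lam2).
  assert (Ht: 0 < t) by (unfold t; apply Rdiv_lt_0_compat; lra).
  assert (HCS: 2 * sumR n (fun i => w i * v i) <= t * d + V * V / t).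
  { rewrite HV2.
    replace (t * d + sumR n (fun i => v i ^ 2) / t) with (sumR n (fun i => t * w i + / t * v i ^ 2)).
    2:{ rewrite sumR_plus, !sumR_scal. unfold d, Rdiv. ring. }
    apply Rle_trans with (sumR n (fun i => 2 * (w i * v i))). rewrite sumR_scal; lra.
    apply sumR_le. intros i Hi. unfold w, v.
    destruct (HOA i j Hi Hj) as [[H1 H2] [[H3 H4] _]]. pose proof (HS i j Hi Hj).
    set (ww := Om i j ^ 2 * A i j). set (vv := Sh i j).
    assert (0 <= ww <= 1) by (unfold ww; split; [nra|]; assert (Om i j ^2 <= 1) by nra; nra).
    assert (Hinv: t * / t = 1) by (field; lra).
    assert (0 < / t) by (apply Rinv_0_lt_compat; lra).
    assert (0 <= (t * ww - vv)^2 * / t) by (apply Rmult_le_pos; [apply pow2_ge_0| lra]).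
    assert (Ee: (t*ww - vv)^2 * /t = t*ww^2 - 2*ww*vv + /t * vv^2) by (field; lra).
    assert (t*ww^2 <= t*ww) by (apply Rmult_le_compat_l; nra).
    lra. }
  assert (Heq: t * d + V * V / t = V * (2 * d / lam2 + lam2 / 2)) by (unfold t; field; lra).
  assert (Hlt: 2 * d / lam2 < lam2 / 2).
  { apply (Rmult_lt_reg_r lam2); [lra|]. unfold Rdiv. rewrite Rmult_assoc, Rinv_l by lra.
    unfold d, w. nra. }
  unfold Fobj in Hmin. rewrite Hn in Hmin. nra.
Qed.

Theorem theorem2 :
  exists c : R, 0 < c /\
  forall (n : nat) (isO : nat -> bool) (rho gam : R) (k : nat)
         (Lst Sst Pi : Mat) (mu nu nut lam1 : R),
    (2 <= n)%nat ->
    0 < rho <= / 2 -> 0 < gam <= 1 -> (1 <= k)%nat ->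
    (forall i j, (i < n)%nat -> (j < n)%nat -> Lst i j = Lst j i) ->
    rank_eq n Lst k ->
    (forall i j, (i < n)%nat -> (j < n)%nat -> 0 <= Lst i j <= rho) ->
    (forall i j, (i < n)%nat -> (j < n)%nat -> (isO i = true \/ isO j = true) -> Lst i j = 0) ->
    (forall i j, (i < n)%nat -> (j < n)%nat -> 0 <= Sst i j <= gam) ->
    (forall i, (i < n)%nat -> Sst i i = 0) ->
    (forall i j, (i < n)%nat -> (j < n)%nat -> isO j = false -> Sst i j = 0) ->
    (forall i j, (i < n)%nat -> (j < n)%nat -> 0 <= Lst i j + Sst i j + Sst j i <= 1) ->
    (forall i j, (i < n)%nat -> (j < n)%nat -> 0 <= Pi i j <= 1 /\ Pi i j = Pi j i) ->
    (forall i, (i < n)%nat -> Pi i i = 0) ->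
    0 < mu ->
    (forall i j, (i < n)%nat -> (j < n)%nat -> isO i = false -> isO j = false ->
       i <> j -> mu <= Pi i j) ->
    0 < nu <= 1 -> 0 < nut <= 1 ->
    (forall i, (i < n)%nat -> isO i = false ->
       sumR n (fun j => if isO j then 0 else Pi i j) <= nu * INR n) ->
    (forall i, (i < n)%nat ->
       sumR n (fun j => if isO j then Pi i j else 0) <= nut * INR (card_out n isO)) ->
    nu * rho >= ln (INR n) / INR n ->
    nut * gam >= ln (INR n) / INR n ->
    nu * rho * INR n >= nut * gam * INR (card_out n isO) ->
    0 < lam1 ->
    prob_AO n (fun i j => Lst i j + Sst i j + Sst j i) Pi
      (no_inlier_detected n isO rho lam1 (19 * sqrt (nu * rho * INR n)))
    >= 1 - c / INR n.
Proof.
  exists 1. split; [lra|].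
  intros n isO rho gam k Lst Sst Pi mu nu nut lam1 Hn Hrho Hgam Hk HLsym Hrank HL HLO HS HSd HSI HP1 HP HPid
    Hmu HmuP Hnu Hnut Hrow Hrowo HA2 HA2' HA3 Hlam1.
  set (P := fun i j => Lst i j + Sst i j + Sst j i).
  set (M := nu * rho * INR n).
  assert (Hn2: 2 <= INR n) by (replace 2 with (INR 2) by (simpl; ring); apply le_INR; assumption).
  assert (Hlnp: 0 < ln (INR n)) by (rewrite <- ln_1; apply ln_increasing; lra).
  assert (HM: ln (INR n) <= M).
  { unfold M. apply Rge_le in HA2. apply (Rmult_le_compat_r (INR n)) in HA2; [|lra].
    unfold Rdiv in HA2. rewrite Rmult_assoc, Rinv_l in HA2 by lra. lra. }
  set (dgf := fun j ba bo => sumR n (fun i => (mat_of_bits n bo i j)^2 * mat_of_bits n ba i j)).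
  set (g := fun j ba bo => if isO j then 0 else exp (dgf j ba bo - 90 * M)).
  assert (Hg0: forall j ba bo, 0 <= g j ba bo) by (intros; unfold g; destruct (isO j); [lra| left; apply exp_pos]).
  assert (Hmat: forall bs a b, (a < n)%nat -> (b < n)%nat -> 0 <= mat_of_bits n bs a b <= 1 /\ mat_of_bits n bs a b = mat_of_bits n bs b a).
  { intros bs a b _ _. unfold mat_of_bits. split; [apply lookup_01| apply lookup_sym]. }
  assert (Step1: forall ba bo, 1 - sumR n (fun j => g j ba bo) <=
     indic (no_inlier_detected n isO rho lam1 (19 * sqrt M) (mat_of_bits n ba) (mat_of_bits n bo))).
  { intros ba bo. unfold indic. destruct (excluded_middle_informative _) as [HE|HE].
    - assert (0 <= sumR n (fun j => g j ba bo)) by (apply sumR_nonneg; intros; apply Hg0). lra.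
    - destruct (classic (exists j, (j<n)%nat /\ isO j = false /\ 90 * M <= dgf j ba bo)) as [[j [Hj [Ho Hge]]]|Hno].
      + assert (1 <= g j ba bo).
        { unfold g. rewrite Ho. pose proof (exp_ineq1_le (dgf j ba bo - 90 * M)). lra. }
        assert (g j ba bo <= sumR n (fun j => g j ba bo)) by (apply (sumR_term n (fun j => g j ba bo)); [intros; apply Hg0| assumption]).
        lra.
      + exfalso. apply HE. intros Sh Lh HfS HfL Hmin Hmin2 j Hj Hoj i Hi.
        assert (HMp: 0 < M) by lra.
        apply (det n (mat_of_bits n bo) (mat_of_bits n ba) Lh Sh lam1 (19 * sqrt M) j); auto.
        * pose proof (sqrt_lt_R0 M HMp). lra.
        * intros a b Ha Hb. destruct (Hmat bo a b Ha Hb), (Hmat ba a b Ha Hb). tauto.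
        * intros a b Ha Hb. apply (HfL a b Ha Hb).
        * intros a b Ha Hb. apply (HfS a b Ha Hb).
        * assert (dgf j ba bo < 90 * M).
          { apply Rnot_le_lt. intros Hc. apply Hno. exists j. auto. }
          replace ((19 * sqrt M)^2) with (361 * (sqrt M * sqrt M)) by ring.
          rewrite sqrt_sqrt by lra. unfold dgf in H. lra. }
  assert (HPr: forall p, In p (map (fun ij => P (fst ij) (snd ij)) (pairs n)) -> 0 <= p <= 1).
  { intros p Hp. apply in_map_iff in Hp as [q [<- Hq]]. apply in_pairs in Hq. unfold P. apply HP1; lia. }
  assert (HPir: forall p, In p (map (fun ij => Pi (fst ij) (snd ij)) (pairs n)) -> 0 <= p <= 1).
  { intros p Hp. apply in_map_iff in Hp as [q [<- Hq]]. apply in_pairs in Hq. apply HP; lia. }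
  unfold prob_AO. apply Rle_ge.
  eapply Rle_trans; [| apply expect_mono; [exact HPr| intros ba; apply expect_mono; [exact HPir| intros bo; apply Step1]]].
  rewrite (expect_ext _ _ (fun ba => 1 - sumR n (fun j => expect (map (fun ij => Pi (fst ij) (snd ij)) (pairs n)) (fun bo => g j ba bo)))).
  2:{ intros ba. rewrite expect_minus, expect_sumR. reflexivity. }
  rewrite expect_minus, expect_sumR.
  assert (Step3: forall j, (j < n)%nat ->
    expect (map (fun ij => P (fst ij) (snd ij)) (pairs n))
      (fun ba => expect (map (fun ij => Pi (fst ij) (snd ij)) (pairs n)) (fun bo => g j ba bo)) <= / (INR n * INR n)).
  { intros j Hj. assert (0 < / (INR n * INR n)) by (apply Rinv_0_lt_compat; nra).
    destruct (isO j) eqn:Ho.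
    - rewrite (expect_ext _ _ (fun _ => 0)), expect_const. lra.
      intros ba. rewrite (expect_ext _ _ (fun _ => 0)), expect_const. reflexivity.
      intros bo. unfold g. rewrite Ho. reflexivity.
    - apply Rle_trans with (expect (map (fun ij => P (fst ij) (snd ij)) (pairs n))
        (fun ba => expect (map (fun ij => Pi (fst ij) (snd ij)) (pairs n)) (fun bo => exp (- (90 * M)) * exp (bnd j (pairs n) ba bo)))).
      { apply expect_mono; [exact HPr|]. intros ba. apply expect_mono; [exact HPir|]. intros bo.
        unfold g. rewrite Ho, <- exp_plus. apply exp_mono.
        pose proof (dg_le_bnd n j (pairs n) ba bo). unfold dgf, mat_of_bits. lra. }
      cbv beta.
      rewrite (expect_ext _ _ (fun ba => exp (- (90 * M)) * expect (map (fun ij => Pi (fst ij) (snd ij)) (pairs n)) (fun bo => exp (bnd j (pairs n) ba bo)))).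
      2:{ intros ba. apply expect_scal. }
      rewrite expect_scal.
      eapply Rle_trans.
      { apply Rmult_le_compat_l; [left; apply exp_pos|]. apply (bnd_expect P Pi j (pairs n)).
        intros q Hq. apply in_pairs in Hq. split; [unfold P; apply HP1; lia| apply HP; lia]. }
      eapply Rle_trans.
      { apply Rmult_le_compat_l; [left; apply exp_pos|]. apply exp_mono. apply Rmult_le_compat_l; [lra|].
        apply (pairs_bound n j (fun a b => P a b * Pi a b)); [assumption| |].
        - intros a b Ha Hb. unfold P. rewrite (HLsym a b Ha Hb). destruct (HP a b Ha Hb) as [_ ->]. ring.
        - intros a b Ha Hb. unfold P. pose proof (HP1 a b Ha Hb). pose proof (HP a b Ha Hb). nra. }
      assert (HR: sumR n (fun i => P i j * Pi i j) <= 2 * M).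
      { eapply Rle_trans.
        { apply sumR_le with (g := fun i => gam * (if isO i then Pi j i else 0) + rho * (if isO i then 0 else Pi j i)).
          intros i Hi. unfold P. rewrite (HSI i j Hi Hj Ho). destruct (HP i j Hi Hj) as [[H0 H1] ->]. pose proof (HP j i Hj Hi).
          destruct (isO i) eqn:Hoi.
          - rewrite (HLO i j Hi Hj (or_introl Hoi)). pose proof (HS j i Hj Hi). nra.
          - rewrite (HSI j i Hj Hi Hoi). pose proof (HL i j Hi Hj). nra. }
        rewrite sumR_plus, !sumR_scal.
        pose proof (Hrow j Hj Ho). pose proof (Hrowo j Hj).
        assert (gam * sumR n (fun i => if isO i then Pi j i else 0) <= gam * (nut * INR (card_out n isO)))
          by (apply Rmult_le_compat_l; lra).
        assert (rho * sumR n (fun i => if isO i then 0 else Pi j i) <= rho * (nu * INR n))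
          by (apply Rmult_le_compat_l; lra).
        unfold M. lra. }
      rewrite <- exp_plus.
      replace (/ (INR n * INR n)) with (exp (- (ln (INR n) + ln (INR n)))).
      2:{ rewrite exp_Ropp, exp_plus, exp_ln by lra. reflexivity. }
      apply exp_mono. lra. }
  assert (HS3: sumR n (fun j => expect (map (fun ij => P (fst ij) (snd ij)) (pairs n))
      (fun ba => expect (map (fun ij => Pi (fst ij) (snd ij)) (pairs n)) (fun bo => g j ba bo))) <= / INR n).
  { eapply Rle_trans. apply sumR_le. exact Step3. rewrite sumR_const. right. field. lra. }
  unfold Rdiv. lra.
Qed.
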